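(* Let $B=[\alpha_1,\beta_1]\times\dots\times[\alpha_d,\beta_d]$ be an axis-parallel box in $\mathbb{R}^d$ with a diagonally opposite pair of vertices $(\lambda,\lambda')$, and let $B'$ be another axis-parallel box in $\mathbb{R}^d$ with $B'\cap\{\lambda,\lambda'\}=\emptyset$. Then $B'$ is disjoint from at least two faces of $B$.
   Context: For a box $B=[\alpha_1,\beta_1]\times\dots\times[\alpha_d,\beta_d]$: a vertex is a point $(\lambda_1,\dots,\lambda_d)$ with $\lambda_j\in\{\alpha_j,\beta_j\}$ for all $j$; vertices $\lambda=(\lambda_1,\dots,\lambda_d)$ and $\lambda'=(\lambda'_1,\dots,\lambda'_d)$ are diagonally opposite if $\{\lambda_j,\lambda'_j\}=\{\alpha_j,\beta_j\}$ for every $j\in[d]$; a face of $B$ is a set of the form $B\cap\{x: x_j=\alpha_j\}$ or $B\cap\{x:x_j=\beta_j\}$ for some $j\in[d]$. *)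

(* Defs.v *)
From HB Require Import structures.
From mathcomp Require Import all_boot all_order all_algebra.
Set Implicit Arguments. Unset Strict Implicit. Unset Printing Implicit Defensive.
Import Order.TTheory GRing.Theory Num.Theory.
Local Open Scope ring_scope.

Definition in_box (R : realFieldType) (d : nat) (a b : 'I_d -> R) (x : 'I_d -> R) : Prop :=
  forall j : 'I_d, a j <= x j /\ x j <= b j.

Definition diag_opposite (R : realFieldType) (d : nat) (a b lam lam' : 'I_d -> R) : Prop :=
  forall j : 'I_d,
    (lam j = a j /\ lam' j = b j) \/ (lam j = b j /\ lam' j = a j).

Definition in_face (R : realFieldType) (d : nat) (a b : 'I_d -> R)
  (f : 'I_d * bool) (x : 'I_d -> R) : Prop :=
  in_box a b x /\ x f.1 = (if f.2 then b f.1 else a f.1).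

(* Main.v *)
Require Import Defs.
From HB Require Import structures.
From mathcomp Require Import all_boot all_order all_algebra.
From Stdlib Require Import Classical.
Import Order.TTheory GRing.Theory Num.Theory.
Local Open Scope ring_scope.

Theorem lemma3 (R : realFieldType) (d : nat)
  (a b a' b' lam lam' : 'I_d -> R)
  (hab : forall j, a j <= b j) (hab' : forall j, a' j <= b' j)
  (hopp : diag_opposite a b lam lam')
  (hB' : ~ in_box a' b' lam /\ ~ in_box a' b' lam') :
  exists f1 f2 : 'I_d * bool,
    f1 <> f2 /\
    (forall x, in_face a b f1 x -> ~ in_box a' b' x) /\
    (forall x, in_face a b f2 x -> ~ in_box a' b' x).
Proof.
case: hB' => h1 h2.
have [j hj] := not_all_ex_not _ _ h1.
have [k hk] := not_all_ex_not _ _ h2.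
exists (j, lam j != a j), (k, lam k == a k).
split; [|split].
- case=> -> ; by case: (lam k == a k).
- move=> x [_ /= hx] hin; apply: hj.
  have -> : lam j = x j.
    rewrite hx; case: eqP => [->//|ne] /=.
    by case: (hopp j) => [[]|[]].
  exact: hin.
- move=> x [_ /= hx] hin; apply: hk.
  have -> : lam' k = x k.
    rewrite hx; case: eqP => [e|ne] /=; case: (hopp k) => [[? ?]|[? ?]] //.
    congruence.
  exact: hin.
Qed.
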